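(* For every hypothesis class $\mathcal H$ with VC dimension $d$ and coVC dimension $k$, there exists a protocol for the realizability problem over $\mathcal H$ with sample complexity $O(dk^2\log k\log|S|)$, where $|S|$ is the size of the joint input sample.
   Context: Communication model: $\mathcal Z=\mathcal X\times\{\pm1\}$ is the set of examples, a sample is a finite sequence of examples. Alice receives sample $S_a$, Bob receives $S_b$, joint sample $S=(S_a,S_b)$ (arbitrary split). A deterministic protocol proceeds by messages, each either a single example from the sender's own input sample or a bit, depending only on the sender's input and previous messages; output determined by the messages; each example or bit costs one unit; sample complexity is the maximum number of units transmitted. The realizability problem: decide whether some $h\in\mathcal H$ has $h(x)=y$ for all $(x,y)\in S$. A subsample of $S$ is a sample all of whose examples appear in $S$; the coVC dimension of $\mathcal H$ is the smallest $k$ such that every non-realizable sample has a non-realizable subsample of size at most $k$. *)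

(* Defs.v *)
From mathcomp Require Import all_boot.
From Stdlib Require Lists.List.
Set Implicit Arguments. Unset Strict Implicit. Unset Printing Implicit Defensive.

(** Examples: Z = X x {+1,-1}; the label +1 is [true], -1 is [false]. *)
Definition example (X : Type) := (X * bool)%type.
Definition sample (X : Type) := seq (example X).

Definition hclass (X : Type) := (X -> bool) -> Prop.

Definition realizable X (H : hclass X) (S : sample X) : Prop :=
  exists h, H h /\ forall z, Stdlib.Lists.List.In z S -> h z.1 = z.2.

Definition subsample X (T S : sample X) : Prop :=
  forall z, Stdlib.Lists.List.In z T -> Stdlib.Lists.List.In z S.

Definition shatters X (H : hclass X) n (xs : 'I_n -> X) : Prop :=
  forall lab : 'I_n -> bool, exists h, H h /\ forall i, h (xs i) = lab i.

Definition VC_dim X (H : hclass X) (d : nat) : Prop :=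
  (exists xs : 'I_d -> X, shatters H xs) /\
  (forall n (xs : 'I_n -> X), shatters H xs -> n <= d).

Definition coVC_bound X (H : hclass X) (k : nat) : Prop :=
  forall S : sample X, ~ realizable H S ->
    exists T : sample X, subsample T S /\ size T <= k /\ ~ realizable H T.

Definition coVC_dim X (H : hclass X) (k : nat) : Prop :=
  coVC_bound H k /\ forall k', coVC_bound H k' -> k <= k'.

Inductive message (X : Type) :=
| MEx of example X
| MBit of bool.

Inductive party := Alice | Bob.

Record protocol (X : Type) := Protocol {
  (* who speaks next, as a function of the transcript; None = halt *)
  next_speaker : seq (message X) -> option party;
  alice_msg : sample X -> seq (message X) -> message X;
  bob_msg : sample X -> seq (message X) -> message X;
  output : seq (message X) -> bool
}.

Definition msg_from X (S : sample X) (m : message X) : Prop :=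
  match m with MEx z => Stdlib.Lists.List.In z S | MBit _ => True end.

Definition valid_protocol X (P : protocol X) : Prop :=
  (forall S tr, msg_from S (alice_msg P S tr)) /\
  (forall S tr, msg_from S (bob_msg P S tr)).

Definition step X (P : protocol X) (Sa Sb : sample X) (tr : seq (message X)) :=
  match next_speaker P tr with
  | None => tr
  | Some Alice => rcons tr (alice_msg P Sa tr)
  | Some Bob => rcons tr (bob_msg P Sb tr)
  end.

Definition transcript X (P : protocol X) (Sa Sb : sample X) (n : nat) :=
  iter n (step P Sa Sb) [::].

(** On input (Sa, Sb), P halts after transmitting at most B units (each
    message, example or bit, costs one unit) and outputs the correct answer to
    the realizability problem for the joint sample S = (Sa, Sb). *)
Definition solves_within X (H : hclass X) (P : protocol X) (Sa Sb : sample X)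
    (B : nat) : Prop :=
  next_speaker P (transcript P Sa Sb B) = None /\
  (output P (transcript P Sa Sb B) <-> realizable H (Sa ++ Sb)).

(* Main.v *)
Require Import Defs.
From mathcomp Require Import all_boot zify.
From Stdlib Require Import Classical ClassicalEpsilon FunctionalExtensionality.
Set Implicit Arguments. Unset Strict Implicit. Unset Printing Implicit Defensive.

Lemma powS_aux d j : j <= d -> (d.+1) ^ j * (d - j) <= d ^ j.+1.
Proof.
elim: j => [|j IH] hj; first by rewrite expn0 mul1n subn0 expn1.
have h1 := IH (ltnW hj).
rewrite expnS [d ^ j.+2]expnS.
have h2 : d.+1 * (d - j.+1) <= (d - j) * d by nia.
move: h1 h2; set A := d.+1 ^ j; set B := d ^ j.+1 => h1 h2.
have h3 : A * (d.+1 * (d - j.+1)) <= A * ((d - j) * d) by rewrite leq_mul2l h2 orbT.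
have h4 : A * (d - j) * d <= B * d by rewrite leq_mul2r h1 orbT.
nia.
Qed.

Lemma powS_bound d : (d.+1) ^ d <= 8 * d ^ d.
Proof.
case: d => [|d]; first by [].
set n := d.+1.
have hn : 0 < n by [].
set h := n./2.
have E := odd_double_half n; rewrite -/h -addnn in E.
have hh : h <= n by lia.
have h2 : n <= 2 * (n - h) by case: (odd n) E => /= E; lia.
have hpos : 0 < n - h by lia.
have A := powS_aux hh.
have B : n.+1 ^ h <= 2 * n ^ h.
  rewrite -(leq_pmul2r hpos).
  rewrite expnSr in A. move: A; set P := n ^ h; set Q := n.+1 ^ h => A.
  have : P * n <= P * (2 * (n - h)) by rewrite leq_mul2l h2 orbT.
  nia.
have hd : n = h + h + (n - (h + h)) by lia.
have C : n.+1 ^ (n - (h + h)) <= 2 * n ^ (n - (h + h)).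
  have -> : n - (h + h) = odd n by case: (odd n) E => /= E; lia.
  case: (odd n) => /=; rewrite ?expn1 ?expn0; lia.
have -> : n.+1 ^ n = n.+1 ^ h * n.+1 ^ h * n.+1 ^ (n - (h + h)) by rewrite -!expnD -hd.
have -> : n ^ n = n ^ h * n ^ h * n ^ (n - (h + h)) by rewrite -!expnD -hd.
apply: leq_trans (leq_mul (leq_mul B B) C) _.
nia.
Qed.

Lemma pow_fact d : d ^ d <= 8 ^ d * d`!.
Proof.
elim: d => [|d IH] //.
rewrite expnS factS.
have B := powS_bound d.
move: IH B; set P := d ^ d; set Q := d.+1 ^ d; set E := 8 ^ d; set F := d`! => IH B.
rewrite expnS -/E.
have : d.+1 * Q <= d.+1 * (8 * P) by rewrite leq_mul2l B orbT.
have : d.+1 * (8 * P) <= d.+1 * (8 * (E * F)) by rewrite !leq_mul2l IH !orbT.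
nia.
Qed.

Lemma expn_monol m n e : m <= n -> m ^ e <= n ^ e.
Proof. by move=> h; case: e => [|e] //; rewrite leq_exp2r. Qed.

Lemma ffact_le_pow n m : n ^_ m <= n ^ m.
Proof.
elim: m n => [|m IH] n //.
rewrite ffactnS expnS leq_mul2l; apply/orP; right.
apply: leq_trans (IH _) _. by apply: expn_monol; apply: leq_pred.
Qed.

Lemma bin_fact_le n d : 'C(n, d) * d`! <= n ^ d.
Proof. by rewrite bin_ffact ffact_le_pow. Qed.

Lemma sum_bin_le n d : \sum_(i < d.+1) 'C(n, i) <= 'C(n + d, d).
Proof.
elim: d => [|d IH]; first by rewrite big_ord1 !bin0.
rewrite big_ord_recr /= addnS binS addnC.
apply: leq_add; last by [].
by apply: leq_bin2l; rewrite leq_addr.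
Qed.

Section Pajor.
Variable U : finType.

Definition shattered (G : {set {set U}}) (S : {set U}) : bool :=
  [forall B : {set U}, (B \subset S) ==> [exists A in G, A :&: S == B]].

Lemma shatteredP (G : {set {set U}}) (S : {set U}) :
  reflect (forall B : {set U}, B \subset S -> exists2 A, A \in G & A :&: S = B) (shattered G S).
Proof.
apply: (iffP forallP) => [h B hB | h B].
  by have /implyP/(_ hB)/existsP[A /andP[AG /eqP e]] := h B; exists A.
apply/implyP => hB; have [A AG e] := h B hB; apply/existsP; exists A; by rewrite AG e eqxx.
Qed.

Lemma pajor_aux n : forall (V : {set U}) (G : {set {set U}}),
  #|V| = n -> (forall A, A \in G -> A \subset V) ->
  #|G| <= #|[set S | shattered G S]|.
Proof.
elim: n => [|n IH] V G hV hG.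
  have V0 : V = set0 by apply/eqP; rewrite -cards_eq0 hV.
  have G0 : forall A, A \in G -> A = set0.
    by move=> A /hG; rewrite V0 subset0 => /eqP.
  case: (set_0Vmem G) => [-> | [A0 A0G]]; first by rewrite cards0.
  have e : G = [set set0].
    apply/setP => A; rewrite inE; apply/idP/eqP => [/G0 // | ->].
    by rewrite -(G0 _ A0G).
  have sh0 : shattered G set0.
    apply/shatteredP => B; rewrite subset0 => /eqP ->; exists set0; last by rewrite setI0.
    by rewrite e inE.
  rewrite e cards1; apply/card_gt0P; exists set0; by rewrite inE -e.
have /card_gt0P[y yV] : 0 < #|V| by rewrite hV.
set V' := V :\ y.
have hV' : #|V'| = n by move: hV; rewrite (cardsD1 y V) yV add1n => -[].
set G0 := [set A :\ y | A in G].
set G1 := [set A in G | (y \notin A) && (y |: A \in G)].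
have hG0 : forall A, A \in G0 -> A \subset V'.
  move=> _ /imsetP[A AG ->]; apply: setSD; exact: hG.
have hG1 : forall A, A \in G1 -> A \subset V'.
  move=> A; rewrite inE => /andP[AG /andP[yA _]].
  apply/subsetP => x xA; rewrite !inE (subsetP (hG _ AG)) // andbT.
  by apply: contraNneq yA => <-.
have IH0 := IH V' G0 hV' hG0.
have IH1 := IH V' G1 hV' hG1.
set Gout := [set A in G | y \notin A].
set Gin := [set A in G | y \in A].
have cG : #|G| = #|Gout| + #|Gin|.
  rewrite -(cardsID [set A : {set U} | y \in A] G) addnC; congr (_ + _); apply: eq_card => A;
  by rewrite !inE andbC.
set Gin' := [set A :\ y | A in Gin].
have cGin : #|Gin'| = #|Gin|.
  apply: card_in_imset => A B; rewrite !inE => /andP[_ yA] /andP[_ yB] e.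
  by rewrite -(setD1K yA) -(setD1K yB) e.
have eG0 : G0 = Gout :|: Gin'.
  apply/setP => B; rewrite inE; apply/imsetP/orP => [[A AG ->]|].
    case yA: (y \in A); [right | left].
      by apply/imsetP; exists A => //; rewrite inE AG yA.
    by rewrite inE (setDidPl _) ?AG ?yA // disjoint_sym disjoints1 yA.
  case => [| /imsetP[A]]; last by rewrite inE => /andP[AG _] ->; exists A.
  rewrite inE => /andP[BG yB]; exists B => //.
  by rewrite (setDidPl _) // disjoint_sym disjoints1.
have eG1 : G1 = Gout :&: Gin'.
  apply/setP => B; rewrite !inE; apply/idP/idP.
    case/andP=> BG /andP[yB yBG]; rewrite BG yB /=.
    apply/imsetP; exists (y |: B); first by rewrite inE yBG setU11.
    by rewrite setU1K.
  case/andP=> /andP[BG yB] /imsetP[A]; rewrite inE => /andP[AG yA] eB.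
  by rewrite BG yB /= eB setD1K.
have cGle : #|G| <= #|G0| + #|G1|.
  by rewrite eG0 eG1 cardsUI cGin cG.
set Sh := [set S | shattered G S].
set Sh0 := [set S | shattered G0 S].
set Sh1 := [set S | shattered G1 S].
have nSh0 : forall S, S \in Sh0 -> y \notin S.
  move=> S; rewrite inE => /shatteredP h; apply/negP => yS.
  have [A /imsetP[A' _ ->] e] := h S (subxx S).
  by move: yS; rewrite -e !inE eqxx.
have nSh1 : forall S, S \in Sh1 -> y \notin S.
  move=> S; rewrite inE => /shatteredP h; apply/negP => yS.
  have [A] := h S (subxx S); rewrite inE => /andP[_ /andP[yA _]] e.
  by move: yS; rewrite -e inE (negbTE yA).
have sub0 : Sh0 \subset Sh.
  apply/subsetP => S hS; have yS := nSh0 _ hS; move: hS; rewrite !inE.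
  move/shatteredP => h; apply/shatteredP => B /h [A /imsetP[A' A'G ->] e].
  exists A' => //; rewrite -e; apply/setP => x; rewrite !inE.
  by case: (x =P y) => [-> | _]; rewrite ?(negbTE yS) ?andbF.
set Sh1' := [set y |: S | S in Sh1].
have cSh1 : #|Sh1'| = #|Sh1|.
  apply: card_in_imset => S T hS hT e.
  by rewrite -(setU1K (nSh1 _ hS)) -(setU1K (nSh1 _ hT)) e.
have sub1 : Sh1' \subset Sh.
  apply/subsetP => _ /imsetP[S hS ->]; have yS := nSh1 _ hS; move: hS.
  rewrite !inE => /shatteredP h; apply/shatteredP => B hB.
  have hB' : B :\ y \subset S.
    apply/subsetP => x; rewrite !inE => /andP[xy xB].
    by move/subsetP: hB => /(_ x xB); rewrite !inE (negbTE xy).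
  have [A] := h _ hB'; rewrite inE => /andP[AG /andP[yA yAG]] e.
  case yB: (y \in B).
    exists (y |: A) => //; apply/setP => x; move/setP: e => /(_ x); rewrite !inE.
    by case: (x =P y) => [-> | _] //=; rewrite yB.
  exists A => //; apply/setP => x; move/setP: e => /(_ x); rewrite !inE.
  case: (x =P y) => [-> | _] /=; last by [].
  by rewrite yB (negbTE yA).
have disj : Sh0 :&: Sh1' = set0.
  apply/setP => S; rewrite !inE.
  apply/negP => /andP[hS /imsetP[T _ eT]].
  by move: (nSh0 S); rewrite inE hS eT setU11 => /(_ isT).
have : #|Sh0| + #|Sh1'| <= #|Sh|.
  rewrite -cardsUI disj cards0 addn0.
  by apply: subset_leq_card; rewrite subUset sub0 sub1.
move: IH0 IH1; rewrite -/Sh0 -/Sh1 -cSh1 => IH0 IH1 h.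
apply: leq_trans cGle _; apply: leq_trans h; exact: leq_add.
Qed.

End Pajor.

Section Sauer.
Variable U : finType.

Lemma card_small_subsets (Y : {set U}) d :
  #|[set S : {set U} | S \subset Y & #|S| <= d]| = \sum_(i < d.+1) 'C(#|Y|, i).
Proof.
elim: d => [|d IH].
  rewrite big_ord1 -cards_draws; apply: eq_card => S; by rewrite !inE leqn0.
rewrite big_ord_recr /= -IH -cards_draws -cardsUI.
have -> : [set S : {set U} | S \subset Y & #|S| <= d] :&: [set S : {set U} | S \subset Y & #|S| == d.+1] = set0.
  apply/setP => S; rewrite !inE; apply/negP => /andP[/andP[_ h1] /andP[_ /eqP h2]].
  by rewrite h2 ltnn in h1.
rewrite cards0 addn0; apply: eq_card => S; rewrite !inE.
by rewrite leq_eqVlt ltnS; case: (S \subset Y); rewrite //= orbC.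
Qed.

Lemma sauer (Fs : {set {set U}}) (Y : {set U}) d :
  (forall S, shattered Fs S -> #|S| <= d) ->
  #|[set A :&: Y | A in Fs]| <= \sum_(i < d.+1) 'C(#|Y|, i).
Proof.
move=> hvc.
set Tr := [set A :&: Y | A in Fs].
have := @pajor_aux U #|[set: U]| [set: U] Tr erefl (fun A _ => subsetT A).
move/leq_trans; apply; rewrite -card_small_subsets; apply: subset_leq_card.
apply/subsetP => S; rewrite !inE => /shatteredP h.
have SY : S \subset Y.
  have [A /imsetP[A' _ ->] e] := h S (subxx S).
  by rewrite -e; apply: subset_trans (subsetIl _ _) (subsetIr _ _).
rewrite SY /=; apply: hvc; apply/shatteredP => B /h [A /imsetP[A' A'F ->] e].
exists A' => //; rewrite -e -setIA (setIidPr SY) //.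
Qed.

End Sauer.

Section Count.
Variable U : finType.
Variable m : nat.
Local Notation T := {ffun 'I_m -> U}.

Lemma card_fix (i : 'I_m) (A : {set U}) :
  #|[set s : T | s i \in A]| * #|U| = #|A| * #|U| ^ m.
Proof.
have -> : [set s : T | s i \in A] =
   @setXn 'I_m (fun _ => U) (fun j => if j == i then A else setT).
  apply/setP => s; rewrite inE in_setXn; apply/idP/forallP => [h j | /(_ i)].
    by case: (j =P i) => [-> | _] //; rewrite inE.
  by rewrite eqxx.
rewrite cardsXn (bigD1 i) //= eqxx.
rewrite (eq_bigr (fun _ => #|U|)); last by move=> j /negbTE ->; rewrite cardsT.
rewrite prod_nat_const cardC1 card_ord -mulnA -expnSr.
by case: m i => [[]|n] //.
Qed.

Definition hits (s : T) (A : {set U}) := #|[set i | s i \in A]|.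

Lemma sum_hits (A : {set U}) : (\sum_(s : T) hits s A) * #|U| = m * #|A| * #|U| ^ m.
Proof.
rewrite /hits.
under eq_bigr do rewrite -sum1_card big_mkcond /=.
rewrite exchange_big /= big_distrl /=.
under eq_bigr => i _.
  rewrite -big_mkcond /= (eq_bigl (fun s : T => s \in [set s : T | s i \in A])); last first.
    by move=> s; rewrite !inE.
  rewrite sum1_card card_fix. over.
by rewrite sum_nat_const card_ord mulnA.
Qed.

Lemma markov (A : {set U}) r l :
  m = 2 * r * l -> 0 < m -> #|U| < r * #|A| ->
  #|U| ^ m < 2 * r * #|[set s : T | l <= hits s A]|.
Proof.
move=> hm m0 heavy.
set G := [set s : T | l <= hits s A].
set N := #|U|.
have A0 : 0 < #|A| by move: heavy; case: #|A| => //; rewrite muln0.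
have N0 : 0 < N by apply: leq_trans A0 (max_card _).
have hle : \sum_(s : T) hits s A <= m * #|G| + l * N ^ m.
  rewrite (bigID (fun s => s \in G)) /=; apply: leq_add.
    rewrite -sum1_card big_distrr /= muln1; apply: leq_sum => s _.
    by rewrite /hits; apply: leq_trans (max_card _) _; rewrite card_ord.
  apply: leq_trans (_ : \sum_(s : T | s \notin G) l <= _).
    apply: leq_sum => s; rewrite inE -ltnNge; exact: ltnW.
  rewrite sum_nat_const mulnC leq_mul2l; apply/orP; right.
  have := max_card (mem [pred s : T | s \notin G]); rewrite card_ffun card_ord.
  by apply: leq_trans; apply: subset_leq_card; apply/subsetP => s; rewrite !inE.
have hs := sum_hits A.
have h1 : N ^ m * m * N < r * (m * #|A| * N ^ m).
  have Pm : 0 < N ^ m * m by rewrite muln_gt0 expn_gt0 N0.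
  move: Pm; set P := N ^ m => Pm.
  have : N * (P * m) < r * #|A| * (P * m) by rewrite ltn_pmul2r.
  nia.
have h2 : r * (m * #|A| * N ^ m) <= r * ((m * #|G| + l * N ^ m) * N).
  by rewrite leq_mul2l -hs leq_mul2r hle !orbT.
have h3 : N ^ m * m * N < r * ((m * #|G| + l * N ^ m) * N) := leq_trans h1 h2.
have h4 : N ^ m * m < r * (m * #|G| + l * N ^ m).
  rewrite -(ltn_pmul2r N0) -[X in _ < X]mulnA. exact: h3.
rewrite -(ltn_pmul2r m0).
move: h4; set P := N ^ m; set g := #|G| => h4.
nia.
Qed.

End Count.

Section Swap.
Variable U : finType.
Variable m : nat.
Local Notation T := {ffun 'I_m -> U}.

Definition swp (sg : {ffun 'I_m -> bool}) (z : T * T) : T * T :=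
  ([ffun i => if sg i then z.2 i else z.1 i], [ffun i => if sg i then z.1 i else z.2 i]).

Lemma swpK sg : involutive (swp sg).
Proof.
case=> s s'; rewrite /swp /=; congr (_, _); apply/ffunP => i; rewrite !ffunE;
by case: (sg i).
Qed.

Lemma swap_count (z : T * T) (B : {set U}) l :
  2 ^ l * #|[set sg : {ffun 'I_m -> bool} |
      [forall i, (swp sg z).1 i \notin B] && (l <= hits (swp sg z).2 B)]| <= 2 ^ m.
Proof.
set G := [set sg | _].
case: (set_0Vmem G) => [-> | [s0 s0G]]; first by rewrite cards0 muln0.
set D := [set i : 'I_m | (z.1 i \in B) != (z.2 i \in B)].
have lD : l <= #|D|.
  move: s0G; rewrite inE => /andP[/forallP h1 h2].
  apply: leq_trans h2 _; apply: subset_leq_card; apply/subsetP => i.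
  rewrite !inE /swp /= !ffunE; move: (h1 i); rewrite /swp /= ffunE.
  by case: (s0 i); case: (z.1 i \in B); case: (z.2 i \in B).
have sub : G \subset @setXn 'I_m (fun _ => bool)
     (fun i => if i \in D then [set (z.1 i \in B)] else setT).
  apply/subsetP => sg; rewrite inE in_setXn => /andP[/forallP h1 _].
  apply/forallP => i; case: ifP => iD; last by rewrite inE.
  move: (h1 i) iD; rewrite /swp /= ffunE !inE.
  by case: (sg i); case: (z.1 i \in B); case: (z.2 i \in B).
have := subset_leq_card sub; rewrite cardsXn.
rewrite (bigID (mem D)) /= big1; last by move=> i ->; rewrite cards1.
rewrite mul1n (eq_bigr (fun _ => 2)); last first.
  by move=> i /negbTE ->; rewrite cardsT card_bool.
rewrite prod_nat_const => hG.
move: hG; set c := #|(fun i : 'I_m => i \notin D)| => hG.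
have cD : #|D| + c = m.
  by have := cardC (mem D); rewrite card_ord.
apply: leq_trans (leq_mul (leqnn _) hG) _.
rewrite -expnD leq_exp2l //; lia.
Qed.

End Swap.

Lemma card_pairs (T1 T2 : finType) (P : {set T1 * T2}) :
  #|P| = \sum_(s : T1) #|[set s' : T2 | (s, s') \in P]|.
Proof.
symmetry.
transitivity (\sum_(s : T1) \sum_(s' : T2) (if (s, s') \in P then 1 else 0)).
  apply: eq_bigr => s _; rewrite -sum1_card big_mkcond /=; apply: congr_big => // s' _; by rewrite inE.
rewrite pair_big /= -sum1_card [in RHS]big_mkcond /=; by apply: eq_big => // -[s s'].
Qed.

Lemma card_le_sum (I V : finType) (S : {set V}) (J : {set I}) (G : I -> {set V}) :
  (forall v, v \in S -> exists2 j, j \in J & v \in G j) ->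
  #|S| <= \sum_(j in J) #|G j|.
Proof.
move=> h.
have -> : \sum_(j in J) #|G j| = \sum_(v : V) \sum_(j in J) (v \in G j : nat).
  rewrite exchange_big /=; apply: eq_bigr => j _.
  by rewrite -sum1_card big_mkcond /=; apply: eq_bigr => v; case: (v \in G j).
rewrite -sum1_card big_mkcond /=; apply: leq_sum => v _.
case: ifP => // /h [j jJ vG]; by rewrite (bigD1 j) //= vG.
Qed.

Section EpsNet.
Variable U : finType.
Variables (Fs : {set {set U}}) (d r l m : nat).
Hypothesis hm : m = 2 * r * l.
Hypothesis hvc : forall S, shattered Fs S -> #|S| <= d.
Hypothesis r0 : 0 < r.
Hypothesis hnum : 2 * r * 'C(2 * m + d, d) < 2 ^ l.
Local Notation T := {ffun 'I_m -> U}.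

Lemma per_z (Bad3 : {set T * T}) (z : T * T) :
  (forall z', z' \in Bad3 -> exists2 A, A \in Fs &
     [forall i, z'.1 i \notin A] && (l <= hits z'.2 A)) ->
  2 ^ l * #|[set sg | swp sg z \in Bad3]| <= 'C(2 * m + d, d) * 2 ^ m.
Proof.
move=> hB.
set Y := [set z.1 i | i in 'I_m] :|: [set z.2 i | i in 'I_m].
have cY : #|Y| <= 2 * m.
  apply: leq_trans (leq_card_setU _ _) _.
  have h1 : #|[set z.1 i | i in 'I_m]| <= m.
    by apply: leq_trans (leq_imset_card _ _) _; rewrite card_ord.
  have h2 : #|[set z.2 i | i in 'I_m]| <= m.
    by apply: leq_trans (leq_imset_card _ _) _; rewrite card_ord.
  lia.
set Tr := [set A :&: Y | A in Fs].
have cTr : #|Tr| <= 'C(2 * m + d, d).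
  apply: leq_trans (sauer Y hvc) _.
  apply: leq_trans (sum_bin_le _ _) _; apply: leq_bin2l; by rewrite leq_add2r.
set G := fun B : {set U} => [set sg : {ffun 'I_m -> bool} |
      [forall i, (swp sg z).1 i \notin B] && (l <= hits (swp sg z).2 B)].
have inY : forall sg i, ((swp sg z).1 i \in Y) && ((swp sg z).2 i \in Y).
  move=> sg i; rewrite /swp /= !ffunE !inE.
  by case: (sg i); rewrite ?imset_f ?orbT.
have hS : forall sg, sg \in [set sg | swp sg z \in Bad3] -> exists2 B, B \in Tr & sg \in G B.
  move=> sg; rewrite inE => /hB [A AF /andP[/forallP h1 h2]].
  exists (A :&: Y); first by apply: imset_f.
  rewrite inE; apply/andP; split.
    apply/forallP => i; rewrite inE negb_and (h1 i) //.
  apply: leq_trans h2 _; apply: subset_leq_card; apply/subsetP => i; rewrite inE => hi.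
  rewrite inE in_setI hi andTb; by case/andP: (inY sg i).
have := card_le_sum hS => hle.
apply: leq_trans (leq_mul (leqnn _) hle) _.
rewrite big_distrr /=.
apply: leq_trans (_ : \sum_(B in Tr) 2 ^ m <= _).
  by apply: leq_sum => B _; apply: swap_count.
by rewrite sum_nat_const leq_mul2r cTr orbT.
Qed.

Theorem eps_net : exists Q : {set U}, #|Q| <= m /\
  forall A, A \in Fs -> #|U| < r * #|A| -> exists2 x, x \in A & x \in Q.
Proof.
have l0 : 0 < l.
  case: (posnP l) hnum => [-> | //]; rewrite expn0 ltnS leqn0 !muln_eq0 => /orP[/orP[//|] | ].
    by rewrite eqn0Ngt r0.
  by rewrite eqn0Ngt bin_gt0 leq_addl.
have m0 : 0 < m by rewrite hm !muln_gt0 r0 l0.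
set N := #|U|.
case: (posnP N) => [N0 | N0].
  exists set0; split; first by rewrite cards0.
  move=> A _ h; exfalso; move: h.
  have : #|A| = 0 by apply/eqP; rewrite -leqn0 -N0 max_card.
  by move=> ->; rewrite muln0 -/N N0.
set Bad1 := [set s : T | [exists A in Fs, (N < r * #|A|) && [forall i, s i \notin A]]].
set Bad3 := [set z : T * T | [exists A in Fs, [forall i, z.1 i \notin A] && (l <= hits z.2 A)]].
have cT : #|T| = N ^ m by rewrite card_ffun card_ord.
have C1 : #|Bad1| * N ^ m <= 2 * r * #|Bad3|.
  rewrite card_pairs big_distrr /= -sum1_card big_distrl /=.
  apply: leq_trans (_ : \sum_(s in Bad1) 2 * r * #|[set s' : T | (s, s') \in Bad3]| <= _); last first.
    by rewrite [X in _ <= X](bigID (mem Bad1)) /= leq_addr.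
  apply: leq_sum => s; rewrite mul1n inE => /existsP[A /andP[AF /andP[heavy /forallP h1]]].
  apply: ltnW; apply: leq_trans (markov (m := m) hm m0 heavy) _.
  rewrite leq_mul2l; apply/orP; right; apply: subset_leq_card; apply/subsetP => s'.
  rewrite !inE => hs'; apply/existsP; exists A; rewrite AF /=; apply/andP; split => //.
  by apply/forallP.
have C2 : 2 ^ l * #|Bad3| <= N ^ m * N ^ m * 'C(2 * m + d, d).
  have e1 : forall sg, #|[set z | swp sg z \in Bad3]| = #|Bad3|.
    move=> sg; rewrite -[RHS](card_preimset _ (inv_inj (@swpK U m sg))).
    by apply: eq_card => z; rewrite !inE.
  have e2 : \sum_(sg : {ffun 'I_m -> bool}) #|[set z | swp sg z \in Bad3]| = 2 ^ m * #|Bad3|.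
    under eq_bigr do rewrite e1.
    by rewrite sum_nat_const card_ffun card_ord card_bool.
  have e3 : \sum_(sg : {ffun 'I_m -> bool}) #|[set z | swp sg z \in Bad3]| =
            \sum_(z : T * T) #|[set sg | swp sg z \in Bad3]|.
    have ee : forall (V : finType) (P : pred V), #|[set v | P v]| = \sum_(v : V) (P v : nat).
      by move=> V P; rewrite -sum1_card big_mkcond /=; apply: eq_bigr => v; rewrite inE.
    under eq_bigr do rewrite ee.
    rewrite exchange_big /=; apply: eq_bigr => z _; by rewrite ee.
  have hB : forall z', z' \in Bad3 -> exists2 A, A \in Fs &
       [forall i, z'.1 i \notin A] && (l <= hits z'.2 A).
    by move=> z'; rewrite inE => /existsP[A /andP[AF h]]; exists A.
  have h4 : 2 ^ l * (2 ^ m * #|Bad3|) <= N ^ m * N ^ m * 'C(2 * m + d, d) * 2 ^ m.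
    rewrite -e2 e3 big_distrr /=.
    apply: leq_trans (_ : \sum_(z : T * T) 'C(2 * m + d, d) * 2 ^ m <= _).
      by apply: leq_sum => z _; apply: per_z.
    by rewrite sum_nat_const card_prod cT mulnA.
  move: h4; have : 0 < 2 ^ m by rewrite expn_gt0.
  set M := 2 ^ m; set c := 'C(_, _); set P := N ^ m; set L := 2 ^ l => Mpos h4.
  have : M * (L * #|Bad3|) <= M * (P * P * c) by nia.
  by rewrite leq_pmul2l.
have hlt : #|Bad1| < N ^ m.
  have s1 : #|Bad1| * N ^ m * 2 ^ l <= 2 * r * #|Bad3| * 2 ^ l := leq_mul C1 (leqnn _).
  have s2 : 2 * r * (2 ^ l * #|Bad3|) <= 2 * r * (N ^ m * N ^ m * 'C(2 * m + d, d)) :=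
    leq_mul (leqnn _) C2.
  have s3 : 2 * r * 'C(2 * m + d, d) * (N ^ m * N ^ m) < 2 ^ l * (N ^ m * N ^ m).
    by rewrite ltn_pmul2r ?muln_gt0 ?expn_gt0 ?N0.
  have PP : 0 < N ^ m by rewrite expn_gt0 N0.
  move: s1 s2 s3 PP; set c := 'C(_, _); set P := N ^ m; set L := 2 ^ l.
  set b1 := #|Bad1|; set b3 := #|Bad3| => s1 s2 s3 PP.
  rewrite ltnNge; apply/negP => hP.
  have : P * P * L <= b1 * P * L by rewrite leq_mul2r leq_mul2r hP !orbT.
  nia.
have [s sB] : exists s : T, s \notin Bad1.
  apply/existsP; rewrite -negb_forall; apply/negP => /forallP hall.
  have : #|Bad1| = #|T|.
    by apply/eqP; rewrite eqn_leq max_card /=; apply: subset_leq_card; apply/subsetP => x _; apply: hall.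
  by rewrite cT => e; rewrite e ltnn in hlt.
exists [set s i | i in 'I_m]; split.
  by apply: leq_trans (leq_imset_card _ _) _; rewrite card_ord.
move=> A AF heavy.
move: sB; rewrite inE negb_exists => /forallP /(_ A); rewrite AF heavy /= negb_forall.
case/existsP => i; rewrite negbK => siA; exists (s i) => //; exact: imset_f.
Qed.

End EpsNet.

Lemma expn_monol' m n e : m <= n -> m ^ e <= n ^ e.
Proof. exact: expn_monol. Qed.

Lemma num_ineq d p : 0 < d ->
  2 * 2 ^ p * 'C(2 * (2 * 2 ^ p * (d * (16 * p.+1))) + d, d) < 2 ^ (d * (16 * p.+1)).
Proof.
move=> d0.
set r := 2 ^ p.
set K := 64 * r * p.+1 + 1.
have eN : 2 * (2 * r * (d * (16 * p.+1))) + d = d * K by rewrite /K; nia.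
rewrite eN.
have h1 := bin_fact_le (d * K) d.
have h2 := pow_fact d.
have h3 : d ^ d * 'C(d * K, d) <= d ^ d * (8 * K) ^ d.
  have : d ^ d * 'C(d * K, d) <= 8 ^ d * d`! * 'C(d * K, d) by rewrite leq_mul2r h2 orbT.
  move/leq_trans; apply.
  rewrite expnMn in h1; rewrite expnMn.
  move: h1; set c := 'C(_, _); set f := d`!; set E := 8 ^ d; set D := d ^ d; set KK := K ^ d => h1.
  have : E * (c * f) <= E * (D * KK) by rewrite leq_mul2l h1 orbT.
  nia.
have dd : 0 < d ^ d by rewrite expn_gt0 d0.
rewrite leq_pmul2l // in h3.
have pr : p.+1 <= r by rewrite /r; apply: ltn_expl.
have rpos : 0 < r by rewrite expn_gt0.
have h4 : 8 * K <= 2 ^ (2 * p + 10).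
  have -> : 2 ^ (2 * p + 10) = r * r * 1024.
    have -> : 2 * p + 10 = p + p + 10 by lia.
    by rewrite !expnD.

  rewrite /K; nia.
have h5 : 'C(d * K, d) <= 2 ^ ((2 * p + 10) * d).
  by apply: leq_trans h3 _; rewrite expnM; apply: expn_monol.
apply: leq_ltn_trans (_ : 2 * r * 2 ^ ((2 * p + 10) * d) < _).
  by rewrite leq_mul2l h5 orbT.
rewrite /r -expnS -expnD ltn_exp2l //; nia.
Qed.

Definition pb (P : Prop) : bool := if excluded_middle_informative P then true else false.
Lemma pbP (P : Prop) : reflect P (pb P).
Proof. by rewrite /pb; case: excluded_middle_informative => h; constructor. Qed.

Section InLemmas.
Variable T : Type.
Lemma In_cat (z : T) s1 s2 : List.In z (s1 ++ s2) <-> List.In z s1 \/ List.In z s2.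
Proof.
elim: s1 => [|x s IH] /=; first by split; [right|case].
rewrite IH; tauto.
Qed.
Lemma In_rcons (z x : T) s : List.In z (rcons s x) <-> List.In z s \/ z = x.
Proof. rewrite -cats1 In_cat /=; split => [[h|[<-|[]]]|[h|->]]; auto. Qed.
Lemma In_take (z : T) n s : List.In z (take n s) -> List.In z s.
Proof. elim: s n => [|x s IH] [|n] //= [->|h]; [by left | right; exact: IH h]. Qed.
Lemma In_drop (z : T) n s : List.In z (drop n s) -> List.In z s.
Proof. elim: s n => [|x s IH] [|n] //= h; right; exact: IH h. Qed.
Lemma In_nth (x0 : T) s i : i < size s -> List.In (nth x0 s i) s.
Proof. elim: s i => [|x s IH] [|i] //= h; [by left | right; exact: IH]. Qed.
Lemma In_drop_cons (z : T) j Q rest : drop j Q = z :: rest -> List.In z Q.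
Proof. move=> h; apply: (@In_drop z j); rewrite h; by left. Qed.
Lemma In_pmap (U : Type) (f : T -> option U) s u :
  List.In u (pmap f s) -> exists y, List.In y s /\ f y = Some u.
Proof.
elim: s => [|x s IH] //=; case e: (f x) => [v|] /=.
  case=> [<- | /IH [y [h1 h2]]]; [exists x; split; [left|]|exists y; split; [right|]] => //.
move/IH => [y [h1 h2]]; exists y; split; [right|] => //.
Qed.
Lemma pmap_In (U : Type) (f : T -> option U) s y u :
  List.In y s -> f y = Some u -> List.In u (pmap f s).
Proof.
elim: s => [|x s IH] //= [<- -> /= | h e]; first by left.
case: (f x) => [v|] /=; [right|]; exact: IH.
Qed.
Lemma In_map (U : Type) (f : T -> U) s u :
  List.In u (map f s) -> exists y, List.In y s /\ u = f y.
Proof.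
elim: s => [|x s IH] //= [<- | /IH [y [h1 h2]]]; first by exists x; split => //; left.
by exists y; split => //; right.
Qed.
Lemma map_In (U : Type) (f : T -> U) s y : List.In y s -> List.In (f y) (map f s).
Proof. elim: s => [|x s IH] //= [-> | h]; [by left | right; exact: IH]. Qed.
Lemma In_sum_le (c : T -> nat) s z : List.In z s -> c z <= \sum_(x <- s) c x.
Proof.
elim: s => [|x s IH] //= [-> | h]; rewrite big_cons; first exact: leq_addr.
apply: leq_trans (IH h) _; exact: leq_addl.
Qed.
End InLemmas.

Lemma mem_In (T : eqType) (x : T) s : x \in s -> List.In x s.
Proof. elim: s => [|y s IH] //=; rewrite inE => /orP[/eqP -> | /IH h]; [by left | by right]. Qed.

Section Net.
Variables (X : Type) (H : hclass X) (d r m : nat).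

Definition wsum (A : sample X) (c : example X -> nat) := \sum_(z <- A) 2 ^ c z.
Definition werr (A : sample X) (c : example X -> nat) (h : X -> bool) :=
  \sum_(z <- A | h z.1 != z.2) 2 ^ c z.

Definition net_spec (A : sample X) (c : example X -> nat) (Q : sample X) :=
  size Q <= m /\ (forall z, List.In z Q -> List.In z A) /\
  (forall h, H h -> (forall z, List.In z Q -> h z.1 = z.2) -> r * werr A c h <= wsum A c).

Definition netof (A : sample X) (c : example X -> nat) : sample X :=
  epsilon (inhabits [::]) (net_spec A c).

Hypothesis hvc : forall n (xs : 'I_n -> X), shatters H xs -> n <= d.
Hypothesis d0 : 0 < d.
Variable p : nat.
Hypothesis hr : r = 2 ^ p.
Hypothesis hm : m = 2 * r * (d * (16 * p.+1)).

Lemma bool_cancel (a b c : bool) : (a != c) = (b != c) -> a = b.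
Proof. by case: a; case: b; case: c. Qed.

Lemma net_exists A c : exists Q, net_spec A c Q.
Proof.
case: A => [|z0 A'].
  exists [::]; split; [by [] | split; [by move=> z [] | ]].
  move=> h _ _; by rewrite /werr /wsum !big_nil muln0.
set A := z0 :: A'.
pose Ut := {i : 'I_(size A) & 'I_(2 ^ c (nth z0 A i))}.
pose ex (u : Ut) := nth z0 A (tag u).
pose Eh (h : X -> bool) := [set u : Ut | h (ex u).1 != (ex u).2].
pose Fs := [set E : {set Ut} | pb (exists h, H h /\ E = Eh h)].
have hvc' : forall S, shattered Fs S -> #|S| <= d.
  move=> S /shatteredP hS.
  pose xs := fun j : 'I_#|S| => (ex (enum_val j)).1.
  apply: (hvc (xs := xs)) => lab.
  pose B := [set u in S | [exists j, (enum_val j == u) && (lab j != (ex u).2)]].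
  have [E EF eE] : exists2 E, E \in Fs & E :&: S = B.
    by apply: hS; apply/subsetP => u; rewrite inE => /andP[].
  move: EF; rewrite inE => /pbP [h [Hh eh]]; rewrite eh in eE.
  exists h; split => // j.
  have uS : enum_val j \in S by apply: enum_valP.
  move/setP: eE => /(_ (enum_val j)); rewrite !inE uS andbT /xs.
  move=> e; apply: bool_cancel (ex (enum_val j)).2 _; rewrite e.
  apply/existsP/idP => [[j' /andP[/eqP ej' hj']] | hj]; last by exists j; rewrite eqxx.
  by move/enum_val_inj: ej' hj' => ->.
have hnum := num_ineq p d0.
have r0 : 0 < r by rewrite hr expn_gt0.
have hnum' : 2 * r * 'C(2 * m + d, d) < 2 ^ (d * (16 * p.+1)) by rewrite hm hr.
have [Q [cQ hQ]] := eps_net hm hvc' r0 hnum'.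
have cardP : forall P : pred (example X),
    #|[set u : Ut | P (ex u)]| = \sum_(z <- A | P z) 2 ^ c z.
  move=> P; rewrite -sum1_card.
  rewrite (eq_bigl (fun u : Ut => P (nth z0 A (tag u)) && xpredT (tagged u))); last first.
    by move=> u; rewrite inE andbT.
  have := @sig_big_dep nat 0 addn 'I_(size A) (fun i => 'I_(2 ^ c (nth z0 A i)))
     (fun i => P (nth z0 A i)) (fun _ _ => true) (fun _ _ => 1).
  move=> e; rewrite -[LHS]e.
  rewrite (big_nth z0) big_mkord; apply: eq_bigr => i _.
  by rewrite sum1_card card_ord.
exists [seq ex u | u <- enum Q]; split; [|split].
- by rewrite size_map -cardE.
- move=> z hz; have [u [_ eu]] := In_map hz; rewrite eu; apply: In_nth; exact: ltn_ord.
- move=> h Hh hcons.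
  have EF : Eh h \in Fs by rewrite inE; apply/pbP; exists h.
  have cU : #|{: Ut}| = wsum A c.
    rewrite /wsum -(cardP xpredT) /=; apply: eq_card => u; by rewrite inE.
  have cE : #|Eh h| = werr A c h by rewrite /werr -cardP.
  rewrite -cU -cE leqNgt; apply/negP => /(hQ _ EF) [x xE xQ].
  move: xE; rewrite inE hcons ?eqxx //.
  apply: map_In; apply: mem_In; by rewrite mem_enum.
Qed.
End Net.

Section Proto.
Variables (X : Type) (H : hclass X) (d k : nat).

Definition Pp := trunc_log 2 k + 4.
Definition Pr := 2 ^ Pp.
Definition Pm := 2 * Pr * (d * (16 * Pp.+1)).
Definition PL := 2 * Pm + 2.

Definition getex (x : message X) : option (example X) :=
  match x with MEx z => Some z | MBit _ => None end.
Definition block (tr : seq (message X)) t :=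
  pmap getex (take (2 * Pm) (drop (t * PL) tr)).
Definition choose_h (Q : sample X) : X -> bool :=
  epsilon (inhabits (fun _ => true)) (fun h => H h /\ forall z, List.In z Q -> h z.1 = z.2).
Definition hyp tr t := choose_h (block tr t).
Definition cnt tr t (z : example X) := count (fun s => hyp tr s z.1 != z.2) (iota 0 t).
Definition netmsg (S : sample X) tr j :=
  match drop j (netof H Pr Pm S (cnt tr (size tr %/ PL))) with
  | z :: _ => MEx z | [::] => MBit X false end.
Definition Tof (S : sample X) := Pr * (trunc_log 2 (size S)).+1.
Definition amsg (S : sample X) tr :=
  if size tr %% PL < Pm then netmsg S tr (size tr %% PL)
  else MBit X ((size tr %/ PL).+1 < Tof S).
Definition bmsg (S : sample X) tr :=
  if (Pm <= size tr %% PL) && (size tr %% PL < 2 * Pm) then netmsg S tr (size tr %% PL - Pm)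
  else MBit X ((size tr %/ PL).+1 < Tof S).
Definition isF (x : message X) := match x with MBit false => true | _ => false end.
Definition aturn (tr : seq (message X)) := (size tr %% PL < Pm) || (size tr %% PL == 2 * Pm).
Definition stopb (tr : seq (message X)) :=
  [&& size tr %% PL == 0, 0 < size tr %/ PL,
      isF (nth (MBit X true) tr ((size tr %/ PL).-1 * PL + 2 * Pm)) &
      isF (nth (MBit X true) tr ((size tr %/ PL).-1 * PL + 2 * Pm + 1))].
Definition nspeak tr : option party :=
  if stopb tr then None else if aturn tr then Some Alice else Some Bob.
Definition outp tr := pb (forall t, t < size tr %/ PL -> realizable H (block tr t)).
Definition proto : protocol X := Protocol nspeak amsg bmsg outp.

Definition pmsg Sa Sb tr := if aturn tr then amsg Sa tr else bmsg Sb tr.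
Definition prun Sa Sb n := iter n (fun tr => rcons tr (pmsg Sa Sb tr)) [::].

Lemma size_run Sa Sb n : size (prun Sa Sb n) = n.
Proof. by elim: n => //= n IH; rewrite size_rcons IH. Qed.

Lemma runS Sa Sb n : prun Sa Sb n.+1 = rcons (prun Sa Sb n) (pmsg Sa Sb (prun Sa Sb n)).
Proof. by []. Qed.

Lemma take_run Sa Sb q n : q <= n -> take q (prun Sa Sb n) = prun Sa Sb q.
Proof.
elim: n => [|n IH]; first by rewrite leqn0 => /eqP ->.
rewrite leq_eqVlt => /orP[/eqP -> | ]; first by rewrite take_oversize // size_run.
rewrite ltnS => hq; rewrite runS -cats1 take_cat size_run.
case: ltnP => h; first exact: IH.
have -> : q = n by apply/eqP; rewrite eqn_leq hq h.
by rewrite subnn take0 cats0.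
Qed.

Lemma nth_run Sa Sb q n x0 : q < n -> nth x0 (prun Sa Sb n) q = pmsg Sa Sb (prun Sa Sb q).
Proof.
move=> hq; rewrite -(nth_take x0 (ltnSn q)) take_run // runS nth_rcons size_run ltnn eqxx.
by [].
Qed.

Lemma PL_gt0 : 0 < PL. Proof. by rewrite /PL addn2. Qed.

Lemma divPL t j : j < PL -> (t * PL + j) %/ PL = t.
Proof. move=> hj; by rewrite divnMDl ?PL_gt0 // divn_small // addn0. Qed.
Lemma modPL t j : j < PL -> (t * PL + j) %% PL = j.
Proof. move=> hj; by rewrite modnMDl modn_small. Qed.

End Proto.

Section Run.
Variables (X : Type) (H : hclass X) (d k : nat).
Variables (Sa Sb : sample X).
Local Notation run := (prun H d k Sa Sb).
Local Notation PL := (PL d k).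
Local Notation Pm := (Pm d k).

Lemma Pm_lt j : j < 2 * Pm -> j < PL.
Proof. rewrite /PL => h; lia. Qed.

Lemma pmsg_net_a t j : j < Pm ->
  pmsg H d k Sa Sb (run (t * PL + j)) = netmsg H d k Sa (run (t * PL + j)) j.
Proof.
move=> hj; have hjL : j < PL by apply: Pm_lt; lia.
by rewrite /pmsg /aturn /amsg size_run modPL // hj.
Qed.

Lemma pmsg_net_b t j : j < Pm ->
  pmsg H d k Sa Sb (run (t * PL + (Pm + j))) = netmsg H d k Sb (run (t * PL + (Pm + j))) j.
Proof.
move=> hj; have hjL : Pm + j < PL by apply: Pm_lt; lia.
rewrite /pmsg /aturn /bmsg size_run modPL //.
have -> : (Pm + j < Pm) = false by lia.
have -> : (Pm + j == 2 * Pm) = false by lia.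
have -> : (Pm <= Pm + j) && (Pm + j < 2 * Pm) by apply/andP; lia.
by rewrite addKn.
Qed.

Lemma pmsg_bit_a t :
  pmsg H d k Sa Sb (run (t * PL + 2 * Pm)) = MBit X (t.+1 < Tof k Sa).
Proof.
have hjL : 2 * Pm < PL by rewrite /PL; lia.
rewrite /pmsg /aturn /amsg size_run modPL // divPL // eqxx orbT.
by have -> : (2 * Pm < Pm) = false by lia.
Qed.

Lemma pmsg_bit_b t :
  pmsg H d k Sa Sb (run (t * PL + 2 * Pm + 1)) = MBit X (t.+1 < Tof k Sb).
Proof.
have hjL : 2 * Pm + 1 < PL by rewrite /PL; lia.
rewrite -addnA /pmsg /aturn /bmsg size_run modPL // divPL //.
have -> : (2 * Pm + 1 < Pm) = false by lia.
have -> : (2 * Pm + 1 == 2 * Pm) = false by lia.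
by have -> : (Pm <= 2 * Pm + 1) && (2 * Pm + 1 < 2 * Pm) = false by lia.
Qed.

Definition Tmax := maxn (Tof k Sa) (Tof k Sb).

Lemma Tof_gt0 (S : sample X) : 0 < Tof k S.
Proof. by rewrite /Tof muln_gt0 /Pr expn_gt0. Qed.

Lemma stopb_run q : q <= Tmax * PL -> stopb d k (run q) = (q == Tmax * PL).
Proof.
move=> hq; rewrite /stopb size_run.
case: (posnP (q %% PL)) => hm; last first.
  apply/esym/negbTE; apply/negP => /eqP e; move: hm; by rewrite e modnMl.
have eq : q = q %/ PL * PL by rewrite {1}(divn_eq q PL) hm addn0.
set t := q %/ PL in eq *.
rewrite /=.
case: (posnP t) => ht.
  rewrite ht /=; apply/esym/negbTE; rewrite eq ht mul0n eq_sym muln_eq0 negb_or.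
  have := Tof_gt0 Sa; have := PL_gt0 d k; rewrite /Tmax; lia.
rewrite /=.
have tt : t.-1.+1 = t by rewrite prednK.
have p1 : t.-1 * PL + 2 * Pm < q.
  rewrite eq -{2}tt mulSn /PL; lia.
have p2 : t.-1 * PL + 2 * Pm + 1 < q.
  rewrite eq -{2}tt mulSn /PL; lia.
rewrite (nth_run _ _ _ _ _ _ p1) (nth_run _ _ _ _ _ _ p2) pmsg_bit_a pmsg_bit_b tt /=.
rewrite eq eqn_mul2r (negbTE (lt0n_neq0 (PL_gt0 d k))) /=.
have : t <= Tmax by rewrite -(leq_pmul2r (PL_gt0 d k)) -eq.
rewrite /Tmax; case: (ltnP t (Tof k Sa)); case: (ltnP t (Tof k Sb)) => /= h1 h2 htm;
  case: (t =P _) => e //; exfalso; lia.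
Qed.

Lemma transcript_run q : q <= Tmax * PL ->
  transcript (proto H d k) Sa Sb q = run q.
Proof.
elim: q => [|q IH] hq //.
rewrite /transcript iterS -/(transcript _ _ _ q) IH ?(ltnW hq) //.
rewrite /step /= /nspeak stopb_run ?(ltnW hq) //.
have -> : (q == Tmax * PL) = false by apply/negbTE; rewrite neq_ltn hq.
by rewrite /pmsg; case: (aturn d k (run q)).
Qed.

Lemma transcript_end B : Tmax * PL <= B ->
  transcript (proto H d k) Sa Sb B = run (Tmax * PL) /\
  next_speaker (proto H d k) (run (Tmax * PL)) = None.
Proof.
have hN : next_speaker (proto H d k) (run (Tmax * PL)) = None.
  by rewrite /= /nspeak stopb_run // eqxx.
move=> hB; split => //.
elim: B hB => [|B IH]; first by rewrite leqn0 => /eqP <-; rewrite transcript_run.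
rewrite leq_eqVlt => /orP[/eqP <- | ]; first by rewrite transcript_run.
rewrite ltnS => /IH e.
by rewrite /transcript iterS -/(transcript _ _ _ B) e /step hN.
Qed.

End Run.

Lemma In_nth_ex (T : Type) (z : T) s : List.In z s -> exists2 j, j < size s & nth z s j = z.
Proof.
elim: s => [|x s IH] //= [-> | /IH [j hj e]]; first by exists 0.
by exists j.+1.
Qed.

Section Corr.
Variables (X : Type) (H : hclass X) (d k : nat).
Hypothesis hvc : forall n (xs : 'I_n -> X), shatters H xs -> n <= d.
Hypothesis d0 : 0 < d.
Local Notation PL := (PL d k).
Local Notation Pm := (Pm d k).

Lemma netof_spec (S : sample X) c : net_spec H (Pr k) Pm S c (netof H (Pr k) Pm S c).
Proof.
rewrite /netof; apply: epsilon_spec.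
exact: (net_exists hvc d0 (p := Pp k)).
Qed.

Lemma block_take (tr : seq (message X)) q s : s * PL + 2 * Pm <= q ->
  block d k (take q tr) s = block d k tr s.
Proof.
move=> h; rewrite /block !take_drop take_takel //; lia.
Qed.

Variables (Sa Sb : sample X).
Local Notation run := (prun H d k Sa Sb).

Lemma hyp_run q n s : s * PL + 2 * Pm <= q -> q <= n ->
  hyp H d k (run q) s = hyp H d k (run n) s.
Proof. by move=> h1 h2; rewrite /hyp -(take_run _ _ _ _ _ h2) block_take. Qed.

Lemma cnt_run q n t : t * PL <= q -> q <= n ->
  cnt H d k (run q) t = cnt H d k (run n) t.
Proof.
move=> h1 h2; rewrite /cnt; apply: functional_extensionality => z; apply: eq_in_count => s; rewrite mem_iota add0n => /andP[_ hs] /=.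
rewrite (hyp_run (n := n)) //; apply: leq_trans h1.
apply: leq_trans (_ : s.+1 * PL <= _); last by rewrite leq_mul2r hs orbT.
by rewrite mulSn /PL; lia.
Qed.

Lemma msgs_valid n x : List.In x (run n) -> msg_from (Sa ++ Sb) x.
Proof.
elim: n => [|n IH] //=; rewrite -/(prun _ _ _ _ _ n) => /In_rcons [/IH // | ->].
rewrite /pmsg /amsg /bmsg /netmsg.
case: (aturn _ _ _); case: ifP => _ //; set Q := netof _ _ _ _ _;
  case e: (drop _ Q) => [|z rest] //=; apply/In_cat.
  by left; apply: (proj1 (proj2 (netof_spec _ _))); apply: In_drop_cons e.
by right; apply: (proj1 (proj2 (netof_spec _ _))); apply: In_drop_cons e.
Qed.

Local Notation N := (Tmax k Sa Sb * PL).
Local Notation tr := (run N).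

Lemma in_block t j z : t < Tmax k Sa Sb -> j < 2 * Pm ->
  nth (MBit X true) tr (t * PL + j) = MEx z -> List.In z (block d k tr t).
Proof.
move=> ht hj e.
have hq : t * PL + j + 0 < N.
  rewrite addn0; apply: leq_trans (_ : t.+1 * PL <= _); last by rewrite leq_mul2r ht orbT.
  rewrite mulSn /PL; lia.
apply: (pmap_In (y := MEx z)) => //.
have <- : nth (MBit X true) (take (2 * Pm) (drop (t * PL) tr)) j = MEx z.
  by rewrite nth_take // nth_drop.
apply: In_nth; rewrite size_take size_drop size_run.
case: ifP => // _; rewrite addn0 in hq; lia.
Qed.

Lemma net_in_block_a t z : t < Tmax k Sa Sb ->
  List.In z (netof H (Pr k) Pm Sa (cnt H d k tr t)) -> List.In z (block d k tr t).
Proof.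
move=> ht hz.
have [cQ _] := netof_spec Sa (cnt H d k tr t).
have [j hj ej] := In_nth_ex hz.
have hjm : j < Pm by apply: leq_trans hj cQ.
apply: (@in_block t j) => //; first by lia.
have hq : t * PL + j < N.
  apply: leq_trans (_ : t.+1 * PL <= _); last by rewrite leq_mul2r ht orbT.
  rewrite mulSn /PL; lia.
rewrite nth_run // pmsg_net_a // /netmsg size_run divPL; last by rewrite /PL; lia.
rewrite (cnt_run (n := N)) ?leq_addr ?(ltnW hq) //.
by rewrite (drop_nth z hj) ej.
Qed.

Lemma net_in_block_b t z : t < Tmax k Sa Sb ->
  List.In z (netof H (Pr k) Pm Sb (cnt H d k tr t)) -> List.In z (block d k tr t).
Proof.
move=> ht hz.
have [cQ _] := netof_spec Sb (cnt H d k tr t).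
have [j hj ej] := In_nth_ex hz.
have hjm : j < Pm by apply: leq_trans hj cQ.
apply: (@in_block t (Pm + j)) => //; first by lia.
have hq : t * PL + (Pm + j) < N.
  apply: leq_trans (_ : t.+1 * PL <= _); last by rewrite leq_mul2r ht orbT.
  rewrite mulSn /PL; lia.
rewrite nth_run // pmsg_net_b // /netmsg size_run divPL; last by rewrite /PL; lia.
rewrite (cnt_run (n := N)) ?leq_addr ?(ltnW hq) //.
by rewrite (drop_nth z hj) ej.
Qed.

End Corr.

Lemma max_in (T : Type) (c : T -> nat) (W : seq T) : W <> [::] ->
  exists z, List.In z W /\ \sum_(x <- W) c x <= size W * c z.
Proof.
elim: W => [//|x W IH] _.
case: W IH => [|y W] IH.
  by exists x; split; [left | rewrite big_cons big_nil addn0 mul1n].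
have [z [hz hs]] := IH ltac:(by []).
case: (leqP (c x) (c z)) => hxz.
  exists z; split; first by right.
  rewrite big_cons mulSn; exact: leq_add.
exists x; split; first by left.
rewrite big_cons mulSn leq_add2l; apply: leq_trans hs _.
by rewrite leq_mul2l ltnW ?orbT.
Qed.

Section Main.
Variables (X : Type) (H : hclass X) (d k : nat).
Hypothesis hvc : forall n (xs : 'I_n -> X), shatters H xs -> n <= d.
Hypothesis d0 : 0 < d.
Hypothesis hcov : coVC_bound H k.
Hypothesis k0 : 0 < k.
Variables (Sa Sb : sample X).
Local Notation PL := (PL d k).
Local Notation Pm := (Pm d k).
Local Notation r := (Pr k).
Local Notation T := (Tmax k Sa Sb).
Local Notation N := (T * PL).
Local Notation tr := (prun H d k Sa Sb N).
Local Notation h := (hyp H d k tr).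
Local Notation c := (cnt H d k tr).

Lemma size_tr : size tr %/ PL = T.
Proof. by rewrite size_run mulnK // PL_gt0. Qed.

Lemma cnt0 : c 0 = fun _ => 0.
Proof. by []. Qed.

Lemma cntS t z : c t.+1 z = c t z + (h t z.1 != z.2).
Proof. by rewrite /cnt -addn1 iotaD count_cat /= addn0. Qed.

Lemma wsumS (S : sample X) t : wsum S (c t.+1) = wsum S (c t) + werr S (c t) (h t).
Proof.
rewrite /wsum /werr (big_mkcond (fun z => h t z.1 != z.2)) -big_split /=.
apply: eq_bigr => z _; rewrite cntS; case: (h t z.1 != z.2) => /=.
  by rewrite addn1 expnS mul2n -addnn.
by rewrite addn0 addn0.
Qed.

Hypothesis hout : forall t, t < T -> realizable H (block d k tr t).

Lemma h_spec t : t < T -> H (h t) /\ forall z, List.In z (block d k tr t) -> h t z.1 = z.2.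
Proof.
move=> ht; rewrite /hyp /choose_h.
apply: (epsilon_spec (inhabits (fun _ => true))
   (fun g => H g /\ forall z, List.In z (block d k tr t) -> g z.1 = z.2)).
by have [g [Hg hg]] := hout ht; exists g.
Qed.

Lemma werr_bound (S : sample X) t : t < T -> (S = Sa \/ S = Sb) ->
  r * werr S (c t) (h t) <= wsum S (c t).
Proof.
move=> ht hS; have [Hh hh] := h_spec ht.
have [_ [_ sp]] := netof_spec k hvc d0 S (c t).
apply: sp => // z hz; apply: hh.
case: hS => e; rewrite e in hz; [exact: (net_in_block_a hvc d0 ht hz) | exact: (net_in_block_b hvc d0 ht hz)].
Qed.

Lemma pot (S : sample X) : (S = Sa \/ S = Sb) -> forall t, t <= T ->
  r ^ t * wsum S (c t) <= r.+1 ^ t * size S.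
Proof.
move=> hS; elim => [|t IH] ht.
  by rewrite !expn0 !mul1n /wsum cnt0 /= expn0 sum1_size.
have h1 := IH (ltnW ht).
have h2 := werr_bound ht hS.
rewrite wsumS expnS [r.+1 ^ t.+1]expnS.
move: h1 h2; set P := wsum S (c t); set E := werr S (c t) (h t); set A := r ^ t; set B := r.+1 ^ t => h1 h2.
have : A * (r * E) <= A * P by rewrite leq_mul2l h2 orbT.
have : r.+1 * (A * P) <= r.+1 * (B * size S) by rewrite leq_mul2l h1 orbT.
nia.
Qed.

Lemma T_gt0 : 0 < T.
Proof. rewrite /Tmax; apply: leq_trans (leq_maxl _ _); exact: Tof_gt0. Qed.

Lemma witness : ~ realizable H (Sa ++ Sb) ->
  exists z, List.In z (Sa ++ Sb) /\ T <= c T z * k.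
Proof.
move=> nr.
have [W [sub [sW nW]]] := hcov nr.
have H0 := proj1 (h_spec T_gt0).
have Wn : W <> [::] by move=> e; apply: nW; rewrite e; exists (h 0); split => // z [].
have err : forall t, t < T -> exists z, List.In z W /\ h t z.1 != z.2.
  move=> t ht; apply: NNPP => hn; apply: nW; exists (h t); split; first exact: (proj1 (h_spec ht)).
  move=> z hz; apply/eqP; apply/negPn/negP => hne; apply: hn; by exists z.
have sumT : T <= \sum_(z <- W) c T z.
  rewrite /cnt.
  under eq_bigr do rewrite -sum1_count big_mkcond /=.
  rewrite exchange_big /=.
  apply: leq_trans (_ : \sum_(s <- iota 0 T) 1 <= _); first by rewrite sum1_size size_iota.
  rewrite big_seq_cond [X in _ <= X]big_seq_cond; apply: leq_sum => s.
  rewrite andbT mem_iota add0n => /andP[_ hs].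
  have [z [hz e]] := err s hs.
  apply: leq_trans (In_sum_le (fun z => if h s z.1 != z.2 then 1 else 0) hz); by rewrite e.
have [z [hz hle]] := max_in (c T) Wn.
exists z; split; first exact: sub.
apply: leq_trans sumT _; apply: leq_trans hle _; by rewrite mulnC leq_mul2l sW orbT.
Qed.

End Main.

Lemma final_arith (r k j cz s : nat) : 8 * k < r -> 0 < k -> r * j <= cz * k -> s < 2 ^ j ->
  r ^ (r * j) * 2 ^ cz <= r.+1 ^ (r * j) * s -> False.
Proof.
move=> hr k0 hc hs hp.
have r0 : 0 < r by lia.
have c8 : 8 * j <= cz.
  rewrite -(leq_pmul2r k0); apply: leq_trans hc.
  rewrite mulnAC leq_mul2r; apply/orP; right; exact: ltnW.
have hb := powS_bound r.
have hpow : r.+1 ^ (r * j) <= 8 ^ j * r ^ (r * j).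
  rewrite !expnM -expnMn; apply: expn_monol; exact: hb.
have h1 : r ^ (r * j) * 2 ^ cz <= r ^ (r * j) * (8 ^ j * s).
  apply: leq_trans hp _; rewrite mulnA [r ^ (r * j) * _]mulnC leq_mul2r hpow orbT //.
have rp : 0 < r ^ (r * j) by rewrite expn_gt0 r0.
rewrite (leq_pmul2l rp) in h1.
have h2 : 8 ^ j * s < 8 ^ j * 2 ^ j by rewrite ltn_pmul2l ?expn_gt0.
have h3 : 2 ^ (8 * j) <= 2 ^ cz by rewrite leq_exp2l.
have e8 : 8 ^ j * 2 ^ j = 2 ^ (4 * j) by rewrite -expnMn mulnC expnM.
have h4 : 2 ^ (4 * j) <= 2 ^ (8 * j) by rewrite leq_exp2l //; lia.
move: h1 h2 h3 h4; rewrite e8; lia.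
Qed.


Lemma r_big k : 0 < k -> 8 * k < Pr k.
Proof.
move=> k0; rewrite /Pr /Pp expnD.
have := trunc_log_ltn k (isT : 1 < 2); rewrite expnS => h.
have -> : 2 ^ 4 = 16 by []. lia.
Qed.

Lemma r_small k : 0 < k -> Pr k <= 16 * k.
Proof.
move=> k0; rewrite /Pr /Pp expnD.
have := trunc_logP (isT : 1 < 2) k0 => h.
have -> : 2 ^ 4 = 16 by []. lia.
Qed.

Section Final.
Variables (X : Type) (H : hclass X) (d k : nat).
Hypothesis hvc : forall n (xs : 'I_n -> X), shatters H xs -> n <= d.
Hypothesis d0 : 0 < d.
Hypothesis hcov : coVC_bound H k.
Hypothesis k0 : 0 < k.
Variables (Sa Sb : sample X).
Local Notation PL := (PL d k).
Local Notation r := (Pr k).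
Local Notation T := (Tmax k Sa Sb).
Local Notation N := (T * PL).
Local Notation tr := (prun H d k Sa Sb N).

Lemma out_iff : outp H d k tr <-> realizable H (Sa ++ Sb).
Proof.
split.
  move/pbP; rewrite size_tr => hout.
  apply: NNPP => nr.
  have [z [hz hle]] := witness hcov hout nr.
  set j := maxn (trunc_log 2 (size Sa)).+1 (trunc_log 2 (size Sb)).+1.
  have eT : T = r * j by rewrite /Tmax /Tof maxnMr.
  have gen : forall S : sample X, (S = Sa \/ S = Sb) -> List.In z S -> False.
    move=> S hS zS.
    have hs : size S < 2 ^ j.
      apply: leq_trans (trunc_log_ltn (size S) (isT : 1 < 2)) _; rewrite leq_exp2l //.
      by case: hS => ->; [apply: leq_maxl | apply: leq_maxr].
    have hp := pot hvc d0 k0 hout hS (leqnn T).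
    have hw := In_sum_le (fun x => 2 ^ cnt H d k tr T x) zS.
    apply: (final_arith (r_big k0) k0 (j := j) (cz := cnt H d k tr T z) (s := size S)).
    - by rewrite -eT.
    - exact: hs.
    rewrite -eT; apply: leq_trans hp; rewrite leq_mul2l; apply/orP; right; exact: hw.
  case/In_cat: hz => hz; [exact: gen (or_introl erefl) hz | exact: gen (or_intror erefl) hz].
move=> [g [Hg hg]]; apply/pbP => t _; exists g; split => // z hz.
apply: hg; have [y [hy e]] := In_pmap hz.
case: y hy e => // z' hy [<-].
exact: (msgs_valid hvc d0 (In_drop (In_take hy))).
Qed.

Lemma cost : N <= (16 * (2 * 2561)) * d * k ^ 2 * (trunc_log 2 k).+1 * (trunc_log 2 (size Sa + size Sb)).+1.
Proof.
set tk := trunc_log 2 k; set tn := trunc_log 2 (size Sa + size Sb).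
have hj : maxn (trunc_log 2 (size Sa)).+1 (trunc_log 2 (size Sb)).+1 <= tn.+1.
  by rewrite geq_max !ltnS !leq_trunc_log ?leq_addr ?leq_addl.
have hT : T <= 16 * k * tn.+1.
  rewrite /Tmax /Tof -maxnMr; apply: leq_mul => //; exact: r_small.
have hL : PL <= (2 * 2561) * k * d * tk.+1.
  have e : PL = 2 * 2 * (r * (d * (16 * (tk + 4).+1))) + 2.
    by rewrite /PL /Pm /Pp -/tk !mulnA.
  rewrite e.
  have := r_small k0 => hr.
  have h1 : r * (d * (16 * (tk + 4).+1)) <= 16 * k * (d * (16 * (5 * tk.+1))).
    apply: leq_mul => //; rewrite leq_mul2l; apply/orP; right; rewrite leq_mul2l; apply/orP; right; lia.
  have e2 : 16 * k * (d * (16 * (5 * tk.+1))) = 1280 * (k * d * tk.+1).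
    lia.
  have h2 : 1 <= k * d * tk.+1 by rewrite !muln_gt0 k0 d0.
  have e3 : (2 * 2561) * k * d * tk.+1 = (2 * 2561) * (k * d * tk.+1) by rewrite !mulnA.
  rewrite e3; move: h1 h2; rewrite e2; set Y := k * d * tk.+1; set Z := r * _ => h1 h2.
  lia.
apply: leq_trans (leq_mul hT hL) _.
have -> : (16 * (2 * 2561)) * d * k ^ 2 * tk.+1 * tn.+1 = (16 * k * tn.+1) * ((2 * 2561) * k * d * tk.+1).
  rewrite expnS expn1; nia.
by [].
Qed.

End Final.

Lemma valid_proto (X : Type) (H : hclass X) (d k : nat) :
  (forall n (xs : 'I_n -> X), shatters H xs -> n <= d) -> 0 < d ->
  valid_protocol (proto H d k).
Proof.
move=> hvc d0.
have gen : forall S tr j, msg_from S (netmsg H d k S tr j).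
  move=> S tr j; rewrite /netmsg; set Q := netof _ _ _ _ _.
  case e: (drop _ Q) => [|z rest] //=.
  by apply: (proj1 (proj2 (netof_spec k hvc d0 _ _))); apply: In_drop_cons e.
split => S tr /=; [rewrite /amsg | rewrite /bmsg]; case: ifP => _ //; exact: gen.
Qed.

Theorem lemma6 :
  exists C : nat,
  forall (X : Type) (H : hclass X) (d k : nat),
    VC_dim H d -> coVC_dim H k ->
    exists P : protocol X,
      valid_protocol P /\
      forall Sa Sb : sample X,
        solves_within H P Sa Sb
          (C * maxn d 1 * (maxn k 1) ^ 2 * (trunc_log 2 k).+1
             * (trunc_log 2 (size Sa + size Sb)).+1).
Proof.
exists (16 * (2 * 2561)) => X H d k [_ hvc0] [hcov0 _].
set d' := maxn d 1; set k' := maxn k 1.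
have d0 : 0 < d' by rewrite leq_max orbT.
have k0 : 0 < k' by rewrite leq_max orbT.
have hvc : forall n (xs : 'I_n -> X), shatters H xs -> n <= d'.
  move=> n xs /hvc0 h; apply: leq_trans h (leq_maxl _ _).
have hcov : coVC_bound H k'.
  move=> S /hcov0 [T [h1 [h2 h3]]]; exists T; split => //; split => //.
  apply: leq_trans h2 (leq_maxl _ _).
have tlk : trunc_log 2 k' = trunc_log 2 k.
  rewrite /k'; case: (posnP k) => [-> | kp]; first by rewrite trunc_log0 trunc_log1.
  by rewrite (maxn_idPl kp).
exists (proto H d' k'); split; first exact: valid_proto.
move=> Sa Sb.
have hB := cost (X := X) d0 k0 Sa Sb; rewrite tlk in hB.
have [e1 e2] := transcript_end H hB.
rewrite /solves_within e1; split => //.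
exact: (out_iff hvc d0 hcov k0 Sa Sb).
Qed.
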